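(* Let $G,H$ be connected graphs. If $\iota(G),\iota(H)<\infty$ then $\iota(G\,\Box\,H)=\iota(G)+\iota(H)$. If $\iota(G)=\infty$ or $\iota(H)=\infty$, then $\iota(G\,\Box\,H)=\infty$.
   Context: For a connected graph $G$ on vertices $v_1,\dots,v_n$, its distance matrix is $D=(d(v_i,v_j))_{i,j=1}^n$, where $d$ is the shortest-path distance; $\vec 1$ denotes the all-ones vector. $G$ is distance exceptional if $D\vec x=\vec 1$ has no solution. A curvature potential is a vector $\vec x$ with $D\vec x=\vec 1$. Curvature index $\iota(G)\in\mathbb{R}\cup\{\infty\}$: if $G$ is distance exceptional or has a curvature potential $\vec x$ with $\vec 1^\top\vec x\neq0$, then $\iota(G)$ is the unique real number with $\{D\vec x:\vec 1^\top\vec x=1\}\cap\mathbb{R}\vec 1=\{\iota(G)\vec 1\}$ (this intersection is a single point); otherwise (curvature potentials exist and all have $\vec 1^\top\vec x=0$) $\iota(G)=\infty$. The Cartesian product $G\,\Box\,H$ has vertex set $V(G)\times V(H)$, with $(u,v)\sim(u',v')$ iff either $u=u'$ and $\{v,v'\}\in E(H)$, or $v=v'$ and $\{u,u'\}\in E(G)$. *)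

(* Defs.v *)
From HB Require Import structures.
From mathcomp Require Import all_boot all_order all_algebra.
From Stdlib Require Import ClassicalEpsilon.
Set Implicit Arguments. Unset Strict Implicit. Unset Printing Implicit Defensive.
Import Order.TTheory GRing.Theory Num.Theory.
Local Open Scope ring_scope.

Section Graphs.
Variable T : finType.
Variable e : rel T.

Definition connected_graph : Prop :=
  [/\ symmetric e, irreflexive e, (0 < #|T|)%N & forall x y : T, connect e x y].

Fixpoint walk_of (n : nat) (x y : T) : bool :=
  if n is n'.+1 then [exists z, e x z && walk_of n' z y] else x == y.

(* shortest-path distance: least n with a walk of length n from x to y.
   In a connected graph such n exists and is < #|T|, so searching
   0 .. #|T|-1 is exact. *)
Definition gdist (x y : T) : nat := find (fun n => walk_of n x y) (iota 0 #|T|).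

Variable R : realFieldType.

Definition distmx_app (x : T -> R) : T -> R :=
  fun u => \sum_(v : T) (gdist u v)%:R * x v.

Definition has_curvature_potential : Prop :=
  exists x : T -> R, forall u, distmx_app x u = 1.

Definition distance_exceptional : Prop := ~ has_curvature_potential.

Definition index_value (t : R) : Prop :=
  forall s : R, (exists x : T -> R, \sum_(v : T) x v = 1 /\
                   forall u, distmx_app x u = s) <-> s = t.

(* curvature index, with None standing for +∞ *)
Definition curvature_index : option R :=
  if excluded_middle_informative
       (distance_exceptional \/
        exists x : T -> R, (forall u, distmx_app x u = 1) /\ \sum_(v : T) x v <> 0)
  then Some (epsilon (inhabits 0) index_value)
  else None.

End Graphs.

Definition boxrel (T1 T2 : finType) (e1 : rel T1) (e2 : rel T2) : rel (T1 * T2) :=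
  fun p q => ((p.1 == q.1) && e2 p.2 q.2) || ((p.2 == q.2) && e1 p.1 q.1).

Definition oadd (R : realFieldType) (a b : option R) : option R :=
  match a, b with Some x, Some y => Some (x + y) | _, _ => None end.

(* Main.v *)
Require Import Defs.
From HB Require Import structures.
From mathcomp Require Import all_boot all_order all_algebra.
From mathcomp Require Import zify ring.
From Stdlib Require Import ClassicalEpsilon.
Set Implicit Arguments. Unset Strict Implicit. Unset Printing Implicit Defensive.
Import Order.TTheory GRing.Theory Num.Theory.
Section Walks.
Variable T : finType.
Variable e : rel T.

Lemma walk_path x p : path e x p -> walk_of e (size p) x (last x p).
Proof.
elim: p x => [|y p IH] x /=; first by [].
move=> /andP[exy hp]; apply/existsP; exists y; rewrite exy; exact: IH.
Qed.

Lemma walk_Sr n x y : walk_of e n.+1 x y = [exists z, walk_of e n x z && e z y].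
Proof.
elim: n x => [|n IH] x.
  apply/existsP/existsP => [[z /andP[h /eqP <-]]|[z /andP[/eqP <- h]]].
    by exists x; rewrite /= eqxx h ?andbT.
  by exists y; rewrite /= eqxx h ?andbT.
apply/existsP/existsP.
- move=> [z /andP[h1 h2]]; have h2' : walk_of e n.+1 z y := h2; rewrite IH in h2'; clear h2; move: h2' => h2; case/existsP: h2 => w /andP[h3 h4].
  exists w; rewrite h4 andbT; apply/existsP; exists z; by rewrite h1.
- move=> [w /andP[/existsP[z /andP[h1 h2]] h3]]; exists z; rewrite h1 /=.
  change (walk_of e n.+1 z y); rewrite IH; apply/existsP; exists w; exact/andP.
Qed.

Lemma walk_sym (se : symmetric e) n x y : walk_of e n x y = walk_of e n y x.
Proof.
elim: n x y => [|n IH] x y; first by rewrite /= eq_sym.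
rewrite walk_Sr /=; apply/existsP/existsP => [[z /andP[h1 h2]]|[z /andP[h1 h2]]];
  exists z; by rewrite IH se ?h1 ?h2.
Qed.

Definition short x y := exists m, (m < #|T|)%N /\ walk_of e m x y.

Lemma conn_short x y : connect e x y -> short x y.
Proof.
case/connectP => p hp ->.
case: (shortenP hp) => p' hp' hu _.
exists (size p'); split; last exact: walk_path.
have := max_card (mem (x :: p')); move/card_uniqP: hu => ->; done.
Qed.

Lemma gdist_walk x y : short x y -> walk_of e (gdist e x y) x y.
Proof.
case=> m [hm hw]; rewrite /gdist.
have hh : has (fun n => walk_of e n x y) (iota 0 #|T|).
  apply/hasP; exists m => //; rewrite mem_iota; lia.
have := nth_find 0 hh; rewrite nth_iota //; move: hh; rewrite has_find size_iota //.
Qed.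

Lemma gdist_lt x y : short x y -> (gdist e x y < #|T|)%N.
Proof.
case=> m [hm hw]; rewrite /gdist.
have hh : has (fun n => walk_of e n x y) (iota 0 #|T|).
  apply/hasP; exists m => //; rewrite mem_iota; lia.
by move: hh; rewrite has_find size_iota.
Qed.

Lemma gdist_min x y m : short x y -> walk_of e m x y -> (gdist e x y <= m)%N.
Proof.
move=> hs hw; rewrite leqNgt; apply/negP => hlt.
have hl := gdist_lt hs.
have := before_find 0 hlt; rewrite nth_iota; last by lia.
by rewrite add0n hw.
Qed.

Lemma gdist_sym (se : symmetric e) x y : gdist e x y = gdist e y x.
Proof. rewrite /gdist; apply: eq_find => n; exact: walk_sym. Qed.

End Walks.
Section Box.
Variables (T1 T2 : finType) (e1 : rel T1) (e2 : rel T2).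

Lemma walk_box_split n (p q : T1 * T2) : walk_of (boxrel e1 e2) n p q ->
  exists a b, n = (a + b)%N /\ walk_of e1 a p.1 q.1 /\ walk_of e2 b p.2 q.2.
Proof.
elim: n p => [|n IH] p /=.
  by move/eqP => ->; exists 0%N, 0%N; rewrite /= !eqxx.
case/existsP => z /andP[hb hw]; have [a [b [-> [ha hb']]]] := IH z hw.
case/orP: hb => /andP[/eqP h1 h2].
- exists a, b.+1; rewrite addnS; split => //; split; first by rewrite h1.
  by apply/existsP; exists z.2; rewrite h2.
- exists a.+1, b; rewrite addSn; split => //; split; last by rewrite h1.
  by apply/existsP; exists z.1; rewrite h2.
Qed.

Lemma walk_box_join a b u u' v v' : walk_of e1 a u u' -> walk_of e2 b v v' ->
  walk_of (boxrel e1 e2) (a + b) (u, v) (u', v').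
Proof.
elim: a u => [|a IH] u /=.
  move/eqP => <-; elim: b v => [|b IHb] v /=; first by move/eqP => <-.
  case/existsP => z /andP[h1 h2]; apply/existsP; exists (u, z).
  by rewrite /boxrel /= eqxx h1 /= IHb.
case/existsP => z /andP[h1 h2] hv; apply/existsP; exists (z, v).
by rewrite /boxrel /= eqxx h1 orbT /= IH.
Qed.

Lemma gdist_box (c1 : connected_graph e1) (c2 : connected_graph e2) (p q : T1 * T2) :
  gdist (boxrel e1 e2) p q = (gdist e1 p.1 q.1 + gdist e2 p.2 q.2)%N.
Proof.
case: c1 => _ _ n1 k1; case: c2 => _ _ n2 k2.
have s1 := conn_short (k1 p.1 q.1); have s2 := conn_short (k2 p.2 q.2).
have w := walk_box_join (gdist_walk s1) (gdist_walk s2).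
rewrite -!surjective_pairing in w.
have sb : short (boxrel e1 e2) p q.
  exists (gdist e1 p.1 q.1 + gdist e2 p.2 q.2)%N; split => //.
  have l1 := gdist_lt s1; have l2 := gdist_lt s2.
  rewrite card_prod; nia.
apply/eqP; rewrite eqn_leq (gdist_min sb w) /=.
have [a [b [-> [ha hb]]]] := walk_box_split (gdist_walk sb).
by rewrite leq_add // gdist_min.
Qed.
End Box.
Local Open Scope ring_scope.
Section Curv.
Variables (T : finType) (e : rel T) (R : realFieldType).
Hypothesis ds : forall u v, gdist e u v = gdist e v u.

Definition Sv (s : R) := exists x : T -> R, \sum_(v : T) x v = 1 /\
                   forall u, distmx_app e x u = s.

Lemma dual (x y : T -> R) :
  \sum_u x u * distmx_app e y u = \sum_u y u * distmx_app e x u.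
Proof.
rewrite /distmx_app.
under eq_bigr do rewrite mulr_sumr.
rewrite exchange_big; apply: eq_bigr => v _; rewrite mulr_sumr.
apply: eq_bigr => u _; rewrite ds; ring.
Qed.

Lemma Sv_uniq s t : Sv s -> Sv t -> s = t.
Proof.
move=> [x [hx1 hx2]] [y [hy1 hy2]].
have := dual x y.
under eq_bigr do rewrite hy2.
under [X in _ = X -> _]eq_bigr do rewrite hx2.
by rewrite -!mulr_suml hx1 hy1 !mul1r => ->.
Qed.

Lemma sum_rank (F : 'I_#|T| -> R) : \sum_i F i = \sum_(v : T) F (enum_rank v).
Proof.
rewrite (reindex enum_rank) //; exists enum_val => i _; [exact: enum_rankK|exact: enum_valK].
Qed.

Lemma fredholm : ~ has_curvature_potential e R ->
  exists z : T -> R, (forall u, distmx_app e z u = 0) /\ \sum_v z v != 0.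
Proof.
move=> hnp.
pose A : 'M[R]_#|T| := \matrix_(i, j) (gdist e (enum_val i) (enum_val j))%:R.
pose b : 'rV[R]_#|T| := const_mx 1.
case: (boolP (b <= A)%MS) => hb.
  case/submxP: hb => D hD; case: hnp.
  exists (fun v => D 0 (enum_rank v)) => u.
  move/matrixP/(_ 0 (enum_rank u)): hD; rewrite /b mxE => ->.
  rewrite mxE sum_rank /distmx_app; apply: eq_bigr => v _.
  by rewrite mxE !enum_rankK ds mulrC.
have [j hj] : exists j, (b *m cokermx A) 0 j != 0.
  apply/existsP; rewrite -negb_forall; apply: contra hb => /forallP h.
  by rewrite submxE; apply/eqP/matrixP => i k; rewrite ord1 (eqP (h k)) mxE.
exists (fun v => cokermx A (enum_rank v) j); split.
  move=> u; have := mulmx_coker A; move/matrixP/(_ (enum_rank u) j).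
  rewrite [X in X = _ -> _]mxE [X in _ = X -> _]mxE sum_rank /distmx_app => h0.
  apply: etrans h0; apply: eq_bigr => v _.
  by rewrite [A _ _]mxE !enum_rankK.
move: hj; rewrite mxE sum_rank; congr (_ != _); apply: eq_bigr => v _.
by rewrite mxE mul1r.
Qed.

Lemma cond_of_Sv s : Sv s ->
  (distance_exceptional e R \/
        exists x : T -> R, (forall u, distmx_app e x u = 1) /\ \sum_(v : T) x v <> 0).
Proof.
move=> [x [hx1 hx2]].
have [s0|s0] := eqVneq s 0.
  rewrite s0 in hx2.
  left => -[w hw]; have := dual x w.
  under eq_bigr do rewrite hw.
  under [X in _ = X -> _]eq_bigr do rewrite hx2.
  rewrite -mulr_suml hx1 mul1r.
  under [X in _ = X -> _]eq_bigr do rewrite mulr0.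
  by rewrite big1_eq; apply/eqP; rewrite oner_eq0.
right; exists (fun v => s^-1 * x v); split.
  move=> u; rewrite /distmx_app.
  under eq_bigr do rewrite mulrCA.
  by rewrite -mulr_sumr -/(distmx_app e x u) hx2 mulVf.
by rewrite -mulr_sumr hx1 mulr1; apply/eqP; rewrite invr_eq0.
Qed.

Lemma Sv_of_cond :
  (distance_exceptional e R \/
        exists x : T -> R, (forall u, distmx_app e x u = 1) /\ \sum_(v : T) x v <> 0) ->
  exists s, Sv s.
Proof.
case=> [hex|[x [hx1 hx2]]].
  have [z [hz1 hz2]] := fredholm hex.
  exists 0, (fun v => (\sum_w z w)^-1 * z v); split.
    by rewrite -mulr_sumr mulVf.
  move=> u; rewrite /distmx_app.
  under eq_bigr do rewrite mulrCA.
  by rewrite -mulr_sumr -/(distmx_app e z u) hz1 mulr0.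
have hx2' : \sum_v x v != 0 by apply/eqP.
exists (\sum_v x v)^-1, (fun v => (\sum_w x w)^-1 * x v); split.
  by rewrite -mulr_sumr mulVf.
move=> u; rewrite /distmx_app.
under eq_bigr do rewrite mulrCA.
by rewrite -mulr_sumr -/(distmx_app e x u) hx1 mulr1.
Qed.

Lemma index_of_Sv t : Sv t -> @index_value _ e R t.
Proof.
move=> ht s; split; first by move=> hs; exact: Sv_uniq hs ht.
by move=> ->.
Qed.

Lemma ci_some t : Sv t -> curvature_index e R = Some t.
Proof.
move=> ht; rewrite /curvature_index.
case: excluded_middle_informative => h; last by case: h; exact: cond_of_Sv ht.
congr Some; have := epsilon_spec (inhabits 0) (@index_value _ e R) (ex_intro _ t (index_of_Sv ht)).
move=> /(_ t) [] /(_ ht) //.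
Qed.

Lemma ci_some_inv t : curvature_index e R = Some t -> Sv t.
Proof.
rewrite /curvature_index.
case: excluded_middle_informative => h // [<-].
have [s hs] := Sv_of_cond h.
have := epsilon_spec (inhabits 0) (@index_value _ e R) (ex_intro _ s (index_of_Sv hs)).
by move=> /(_ s) [] /(_ hs) <-.
Qed.

Lemma ci_none : (forall s, ~ Sv s) -> curvature_index e R = None.
Proof.
move=> hn; rewrite /curvature_index.
case: excluded_middle_informative => h //.
by have [s hs] := Sv_of_cond h; case: (hn s).
Qed.

Lemma ci_none_inv : curvature_index e R = None -> forall s, ~ Sv s.
Proof.
rewrite /curvature_index.
by case: excluded_middle_informative => h // _ s hs; case: h; exact: cond_of_Sv hs.
Qed.
End Curv.
Section Main.
Variables (R : realFieldType) (T1 T2 : finType) (e1 : rel T1) (e2 : rel T2).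
Hypotheses (c1 : connected_graph e1) (c2 : connected_graph e2).

Lemma sum_pair (F : T1 * T2 -> R) : \sum_q F q = \sum_u \sum_v F (u, v).
Proof. by rewrite pair_bigA; apply: eq_bigr => -[]. Qed.

Lemma marg (x : T1 * T2 -> R) (p : T1 * T2) :
  distmx_app (boxrel e1 e2) x p =
  distmx_app e1 (fun u => \sum_v x (u, v)) p.1 +
  distmx_app e2 (fun v => \sum_u x (u, v)) p.2.
Proof.
rewrite /distmx_app sum_pair.
under eq_bigr do under eq_bigr do rewrite gdist_box // natrD mulrDl.
under eq_bigr do rewrite big_split /=.
rewrite big_split /=; congr (_ + _).
  by apply: eq_bigr => u _; rewrite mulr_sumr.
rewrite exchange_big /=; apply: eq_bigr => v _; rewrite mulr_sumr.
by apply: eq_bigr.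
Qed.
End Main.
Theorem theorem3p4 (R : realFieldType) (T1 T2 : finType) (e1 : rel T1) (e2 : rel T2) :
  connected_graph e1 -> connected_graph e2 ->
  (forall a b : R,
     curvature_index e1 R = Some a -> curvature_index e2 R = Some b ->
     curvature_index (boxrel e1 e2) R = Some (a + b)) /\
  ((curvature_index e1 R = None \/ curvature_index e2 R = None) ->
     curvature_index (boxrel e1 e2) R = None).
Proof.
move=> c1 c2.
have ds1 : forall u v, gdist e1 u v = gdist e1 v u.
  by case: c1 => se _ _ _; exact: gdist_sym.
have ds2 : forall u v, gdist e2 u v = gdist e2 v u.
  by case: c2 => se _ _ _; exact: gdist_sym.
have dsP : forall p q, gdist (boxrel e1 e2) p q = gdist (boxrel e1 e2) q p.
  by move=> p q; rewrite !gdist_box // ds1 ds2.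
split.
  move=> a b h1 h2.
  have [x1 [s1 d1]] := ci_some_inv ds1 h1.
  have [x2 [s2 d2]] := ci_some_inv ds2 h2.
  apply: (ci_some dsP); exists (fun p => x1 p.1 * x2 p.2); split.
    rewrite sum_pair /=; under eq_bigr do rewrite -mulr_sumr.
    by rewrite -mulr_suml s1 s2 mulr1.
  move=> p; rewrite marg //; congr (_ + _).
    rewrite /distmx_app; under eq_bigr do rewrite /= -mulr_sumr s2 mulr1.
    exact: d1.
  rewrite /distmx_app; under eq_bigr do rewrite /= -mulr_suml s1 mul1r.
  exact: d2.
case=> h.
  have hn := ci_none_inv ds1 h.
  apply: (ci_none dsP) => s [x [hs hx]].
  have [v0 _] : exists v, v \in T2 by case: c2 => _ _ /card_gt0P.
  apply: (hn (s - distmx_app e2 (fun v => \sum_u x (u, v)) v0)).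
  exists (fun u => \sum_v x (u, v)); split; first by rewrite -sum_pair.
  by move=> u; rewrite -(hx (u, v0)) marg //= addrK.
have hn := ci_none_inv ds2 h.
apply: (ci_none dsP) => s [x [hs hx]].
have [u0 _] : exists u, u \in T1 by case: c1 => _ _ /card_gt0P.
apply: (hn (s - distmx_app e1 (fun u => \sum_v x (u, v)) u0)).
exists (fun v => \sum_u x (u, v)); split; first by rewrite exchange_big -sum_pair.
by move=> v; rewrite -(hx (u0, v)) marg //= [_ + distmx_app e2 _ _]addrC addrK.
Qed.
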